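(* Every finite graph is isomorphic to an induced subgraph of the commuting graph of some finite group. This group can be taken to be nilpotent of class $2$ and exponent $4$.
   Context: The commuting graph of a group $G$ has vertex set $G$, distinct $x,y$ adjacent iff $xy=yx$. *)

(* Defs.v *)
From mathcomp Require Import all_boot all_fingroup all_solvable.
Set Implicit Arguments. Unset Strict Implicit. Unset Printing Implicit Defensive.

Definition simple_graph (V : finType) (adj : rel V) : Prop :=
  symmetric adj /\ irreflexive adj.

Definition commuting_adj (gT : finGroupType) (x y : gT) : Prop :=
  x != y /\ commute x y.

Definition induced_commuting_embedding (V : finType) (adj : rel V)
  (gT : finGroupType) (f : V -> gT) : Prop :=
  injective f /\ forall u v : V, adj u v <-> commuting_adj (f u) (f v).

(* Main.v *)
Require Import Defs.
From HB Require Import structures.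
From mathcomp Require Import all_boot all_fingroup all_solvable.
Set Implicit Arguments. Unset Strict Implicit. Unset Printing Implicit Defensive.
Set Warnings "-redundant-canonical-projection -notation-overridden".

Section Cons.
Variables (I : finType) (m : rel I).

Definition car := ({ffun I -> bool} * {ffun I * I -> bool})%type.
Definition beta (a c : {ffun I -> bool}) : {ffun I * I -> bool} :=
  [ffun p => [&& m p.1 p.2, a p.1 & c p.2]].
Definition cmul (x y : car) : car :=
  ([ffun i => x.1 i (+) y.1 i], [ffun p => x.2 p (+) y.2 p (+) beta x.1 y.1 p]).
Definition cone : car := ([ffun => false], [ffun => false]).
Definition cinv (x : car) : car := (x.1, [ffun p => x.2 p (+) beta x.1 x.1 p]).

Lemma cmulA : associative cmul.
Proof.
move=> [a b] [c d] [e f]; rewrite /cmul /=; congr pair; apply/ffunP => p; rewrite !ffunE /=.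
  by rewrite addbA.
rewrite /beta ?ffunE /=.
by case: (a p.1); case: (c p.1); case: (e p.2); case: (c p.2); case: (m _ _);
  case: (b p); case: (d p); case: (f p).
Qed.
Lemma cmul1 : left_id cone cmul.
Proof.
move=> [a b]; rewrite /cmul /=; congr pair; apply/ffunP => p; rewrite !ffunE //=.
by rewrite /beta ?ffunE /= ?andbF ?addbF.
Qed.
Lemma cmulV : left_inverse cone cinv cmul.
Proof.
move=> [a b]; rewrite /cmul /=; congr pair; apply/ffunP => p; rewrite !ffunE //=.
  by rewrite addbb.
move=> /=; rewrite ?ffunE /=; by case: (b p); case: [&& _, _ & _].
Qed.
End Cons.

Definition CG (I : finType) (m : rel I) : Type := car I.
HB.instance Definition _ (I : finType) (m : rel I) := Finite.on (CG m).
HB.instance Definition _ (I : finType) (m : rel I) :=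
  Finite_isGroup.Build (CG m) (@cmulA I m) (@cmul1 I m) (@cmulV I m).

Section Props.
Variables (I : finType) (m : rel I).
Implicit Types x y : CG m.

Lemma mulE x y : (x * y)%g = cmul m x y. Proof. by []. Qed.
Lemma invE x : (x^-1)%g = cinv m x. Proof. by []. Qed.
Lemma oneE : (1 : CG m)%g = cone I. Proof. by []. Qed.

Lemma central x y : x.1 = [ffun => false] -> commute x y.
Proof.
case: x y => [a b] [c d] /= ->; rewrite /commute mulE /cmul /=; congr pair;
  apply/ffunP => p; rewrite /beta !ffunE /= ?andbF.
  by rewrite addbC.
by rewrite !addbF addbC.
Qed.

Lemma commg1 x y : ([~ x, y]%g).1 = [ffun => false].
Proof.
case: x y => [a b] [c d]; rewrite /commg /conjg !mulE !invE /cmul /=.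
apply/ffunP => i; rewrite !ffunE /=.
by case: (a i); case: (c i).
Qed.

Lemma expg4 x : (x ^+ 4 = 1)%g.
Proof.
have -> : (x ^+ 4 = (x * x) * (x * x))%g by rewrite !expgS expg0 mulg1 !mulgA.
case: x => [a b]; rewrite !mulE oneE /cmul /cone /=; congr pair;
  apply/ffunP => p; rewrite /beta !ffunE /=.
  by case: (a p).
rewrite ?ffunE /=.
by case: (a p.1); case: (a p.2); case: (b p); case: (m _ _).
Qed.

Lemma nil2 : nil_class [set: CG m] <= 2.
Proof.
rewrite nil_class2 derg1 gen_subG; apply/subsetP => _ /imset2P [x y _ _ ->].
apply/centerP; split; first exact: in_setT.
by move=> z _; apply: central; apply: commg1.
Qed.
End Props.

Definition mk (V : finType) (adj : rel V) : rel (V + bool) :=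
  fun i j => match i, j with inl u, inl v => ~~ adj u v | _, _ => true end.

Definition gen (I : finType) (m : rel I) (i : I) : CG m :=
  ([ffun j => j == i], [ffun => false]).

Lemma gen2 (I : finType) (m : rel I) i j :
  ((gen m i * gen m j)%g).2 (i, j) = m i j.
Proof. by rewrite mulE /cmul /= /beta !ffunE /= !eqxx !andbT. Qed.

Lemma gen2' (I : finType) (m : rel I) i j k l :
  ((gen m i * gen m j)%g).2 (k, l) = [&& m k l, k == i & l == j].
Proof. by rewrite mulE /cmul /= /beta !ffunE. Qed.

Lemma gen_neq (I : finType) (m : rel I) i j : i != j -> gen m i != gen m j.
Proof.
move=> nij; apply/eqP => /(congr1 (fun x : CG m => x.1 i)); rewrite !ffunE eqxx.
by rewrite (negPf nij).
Qed.

Theorem mainTheorem7 (V : finType) (adj : rel V) :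
  simple_graph adj ->
  exists (gT : finGroupType) (f : V -> gT),
    [/\ induced_commuting_embedding adj f,
        nilpotent [set: gT], nil_class [set: gT] = 2
      & exponent [set: gT] = 4].
Proof.
rewrite /simple_graph /induced_commuting_embedding /commuting_adj.
move=> [sym irr].
pose m := mk adj.
exists (CG m), (fun u => gen m (inl u)).
have inj : injective (fun u => gen m (inl u)).
  move=> u v /= E; case: (eqVneq u v) => // nuv.
  have : inl u != inl v :> V + bool by apply: contra nuv => /eqP [->].
  by move/(gen_neq m); rewrite E eqxx.
have cl2 : nil_class [set: CG m] = 2.
  apply/eqP; rewrite eqn_leq nil2 /= ltnNge nil_class1; apply/negP => /centsP ab.
  have := ab (gen m (inr false)) (in_setT _) (gen m (inr true)) (in_setT _).
  move/(congr1 (fun x : CG m => x.2 (inr false, inr true))).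
  by rewrite gen2 gen2'.
split => //.
- split => // u v; split.
  + move=> auv; have nuv : u != v by apply: contraTneq auv => ->; rewrite irr.
    split; first by apply: gen_neq; apply: contra nuv => /eqP [->].
    rewrite /commute !mulE /cmul /=; congr pair; apply/ffunP => p; rewrite /beta !ffunE /=.
      by rewrite addbC.
    case: p => i j /=.
    have H : forall a b, adj a b -> [&& m i j, i == inl a & j == inl b] = false.
      move=> a b ab; case: eqP => [->|]; case: eqP => [->|]; rewrite ?andbF //=.
      by rewrite ab.
    by rewrite H // H // sym.
  + move=> [nuv]; move/(congr1 (fun x : CG m => x.2 (inl u, inl v))).
    rewrite gen2 gen2' /=.
    have -> : (inl u == inl v :> V + bool) = false.
      by apply/negbTE; apply: contra nuv => /eqP ->.
    by rewrite /= andbF => /negbFE.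
- by apply: small_nil_class; rewrite cl2.
- apply/eqP; rewrite eqn_dvd.
  have d4 : exponent [set: CG m] %| 4 by apply/exponentP => x _; apply: expg4.
  rewrite d4 /=.
  have n2 : ~~ (exponent [set: CG m] %| 2).
    apply/negP => /exponentP /(_ (gen m (inr false)) (in_setT _)).
    rewrite expgS expg1 => /(congr1 (fun x : CG m => x.2 (inr false, inr false))).
    by rewrite gen2 oneE /= ffunE.
  move: d4 n2; case: (exponent _) => [|[|[|[|[|e]]]]] //.
Qed.
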